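(* Let $\Omega\subset\mathbb{R}^2$ be open, $\lambda>0$, and let $u\in L^2(\Omega)$ satisfy $-\Delta u=\lambda u$ in $\Omega$. Let $\mathbf{x}_0\in\Omega$, $h>0$, $\alpha\in(0,1)$, and let $\mathbf{e}^-,\mathbf{e}^+$ be unit vectors with angle $\alpha\pi$ from $\mathbf{e}^-$ to $\mathbf{e}^+$; put $\Gamma^\pm=\{\mathbf{x}_0+t\mathbf{e}^\pm:0\le t\le h\}\subset\Omega$. Suppose $\partial_\nu u+\eta_2u=0$ on $\Gamma^+$, where $\eta_2\in C^1(\Gamma^+)$ is complex-valued and $\nu$ is a unit normal to $\Gamma^+$, and $u=0$ on $\Gamma^-$. If $\alpha\notin\{\frac14,\frac12,\frac34\}$, then $u$ vanishes up to the order $3$ at $\mathbf{x}_0$, i.e. $u$ and all its partial derivatives of order $1$ and $2$ vanish at $\mathbf{x}_0$.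
   Context: No boundary condition is imposed on $\partial\Omega$; $u$ is real-analytic in $\Omega$. *)

(* Defs.v *)
From Stdlib Require Import Reals List.
From Coquelicot Require Import Coquelicot.
Open Scope R_scope.

Definition pt_add (p q : R * R) : R * R := (fst p + fst q, snd p + snd q).
Definition pt_scal (t : R) (p : R * R) : R * R := (t * fst p, t * snd p).

Definition dC (g : R -> C) (t : R) : C :=
  (Derive (fun s => Re (g s)) t, Derive (fun s => Im (g s)) t).

Definition pd1 (f : R * R -> C) : R * R -> C :=
  fun p => dC (fun t => f (t, snd p)) (fst p).
Definition pd2 (f : R * R -> C) : R * R -> C :=
  fun p => dC (fun t => f (fst p, t)) (snd p).

(* Iterated partial derivative along a word: false = d/dx1, true = d/dx2. *)
Definition iter_pd (w : list bool) (f : R * R -> C) : R * R -> C :=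
  fold_right (fun (b : bool) (g : R * R -> C) => if b then pd2 g else pd1 g) f w.

Definition smooth_on (Om : R * R -> Prop) (f : R * R -> C) : Prop :=
  forall (w : list bool) (p : R * R), Om p ->
    ex_derive (fun t => Re (iter_pd w f (t, snd p))) (fst p) /\
    ex_derive (fun t => Im (iter_pd w f (t, snd p))) (fst p) /\
    ex_derive (fun t => Re (iter_pd w f (fst p, t))) (snd p) /\
    ex_derive (fun t => Im (iter_pd w f (fst p, t))) (snd p) /\
    continuous (fun q : R * R => Re (iter_pd w f q)) p /\
    continuous (fun q : R * R => Im (iter_pd w f q)) p.

Definition lap (f : R * R -> C) : R * R -> C :=
  fun p => Cplus (pd1 (pd1 f) p) (pd2 (pd2 f) p).

Definition ddir (v : R * R) (f : R * R -> C) : R * R -> C :=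
  fun p => Cplus (Cmult (RtoC (fst v)) (pd1 f p)) (Cmult (RtoC (snd v)) (pd2 f p)).

Definition rot (a : R) (v : R * R) : R * R :=
  (cos a * fst v - sin a * snd v, sin a * fst v + cos a * snd v).

(* eta : R -> C (parametrised by arc length t in [0,h]) is C^1 on [0,h]. *)
Definition C1_on_interval (a b : R) (eta : R -> C) : Prop :=
  forall t, a <= t <= b ->
    ex_derive (fun s => Re (eta s)) t /\ ex_derive (fun s => Im (eta s)) t /\
    continuous (Derive (fun s => Re (eta s))) t /\
    continuous (Derive (fun s => Im (eta s))) t.

(* Main.v *)
Require Import Defs.
From Stdlib Require Import Reals List Lra Psatz Lia.
From Coquelicot Require Import Coquelicot.
Open Scope R_scope.

Lemma deriv_zero_right f t0 d l : 0 < d -> is_derive f t0 l ->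
  (forall t, t0 <= t <= t0 + d -> f t = 0) -> l = 0.
Proof.
  intros Hd Hder Hz.
  apply is_derive_Reals in Hder.
  destruct (Req_dec l 0) as [E|NE]; [exact E|exfalso].
  assert (He : 0 < Rabs l) by (apply Rabs_pos_lt; exact NE).
  destruct (Hder (Rabs l) He) as [delta Hdel].
  set (k := Rmin d (delta/2)).
  assert (Hk : 0 < k) by (unfold k; apply Rmin_pos; [lra| destruct delta; simpl; lra]).
  assert (Hk1 : k <= d) by apply Rmin_l.
  assert (Hk2 : k <= delta/2) by apply Rmin_r.
  specialize (Hdel k).
  rewrite (Hz (t0 + k)) in Hdel by lra.
  rewrite (Hz t0) in Hdel by lra.
  assert (Hq : (0 - 0) / k - l = - l) by (field; lra).
  rewrite Hq, Rabs_Ropp in Hdel.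
  assert (Rabs k < delta).
  { rewrite Rabs_pos_eq by lra. destruct delta; simpl in *; lra. }
  specialize (Hdel ltac:(lra) H). lra.
Qed.
Lemma chain F a b v1 v2 t0 x y : x = a + t0*v1 -> y = b + t0*v2 ->
 locally_2d (fun p q => ex_derive (fun z => F z q) p) x y ->
 ex_derive (fun z => F x z) y ->
 continuity_2d_pt (fun p q => Derive (fun z => F z q) p) x y ->
 is_derive (fun t => F (a + t*v1) (b + t*v2)) t0
   (Derive (fun z => F z y) x * v1 + Derive (fun z => F x z) y * v2).
Proof.
  intros Ex Ey Hl Hy Hc.
  apply is_derive_Reals.
  assert (Hd : differentiable_pt_lim F x y (Derive (fun z => F z y) x) (Derive (fun z => F x z) y)).
  { apply filterdiff_differentiable_pt_lim.
    apply (is_derive_filterdiff F x y (fun p q => Derive (fun z => F z q) p)).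
    - apply locally_2d_locally in Hl.
      eapply filter_imp; [|exact Hl]. intros [p q] H; simpl in *.
      apply Derive_correct; exact H.
    - apply Derive_correct; exact Hy.
    - apply continuity_2d_pt_filterlim in Hc. exact Hc. }
  subst x y.
  apply (derivable_pt_lim_comp_2d F (fun t => a + t*v1) (fun t => b + t*v2)).
  - exact Hd.
  - apply is_derive_Reals. auto_derive; auto; ring.
  - apply is_derive_Reals. auto_derive; auto; ring.
Qed.
Definition cp (b : bool) (z : C) : R := if b then Im z else Re z.
Definition comp (u : R*R -> C) (b : bool) (w : list bool) (x y : R) : R := cp b (iter_pd w u (x,y)).

Lemma comp_pd1 u b w x y : Derive (fun z => comp u b w z y) x = comp u b (false::w) x y.
Proof. destruct b; reflexivity. Qed.
Lemma comp_pd2 u b w x y : Derive (fun z => comp u b w x z) y = comp u b (true::w) x y.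
Proof. destruct b; reflexivity. Qed.

Section S.
Variables (Om : R * R -> Prop) (u : R*R -> C).
Hypothesis (Hs : smooth_on Om u) (Ho : open Om).

Lemma sm_ex1 b w x y : Om (x,y) -> ex_derive (fun z => comp u b w z y) x.
Proof. intros H. destruct (Hs w (x,y) H) as (A1&A2&A3&A4&A5&A6). destruct b; assumption. Qed.
Lemma sm_ex2 b w x y : Om (x,y) -> ex_derive (fun z => comp u b w x z) y.
Proof. intros H. destruct (Hs w (x,y) H) as (A1&A2&A3&A4&A5&A6). destruct b; assumption. Qed.
Lemma sm_cont b w x y : Om (x,y) -> continuity_2d_pt (comp u b w) x y.
Proof. intros H. destruct (Hs w (x,y) H) as (A1&A2&A3&A4&A5&A6).
  apply continuity_2d_pt_filterlim.
  destruct b; unfold comp, cp.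
  - eapply filterlim_ext; [|exact A6]. intros [p q]; reflexivity.
  - eapply filterlim_ext; [|exact A5]. intros [p q]; reflexivity.
Qed.
Lemma sm_loc x y : Om (x,y) -> locally_2d (fun p q => Om (p,q)) x y.
Proof. intros H. apply locally_2d_locally. eapply filter_imp; [|exact (Ho _ H)].
  intros [p q] Hp; exact Hp. Qed.

Lemma comp_chain b w a c v1 v2 t0 x y : x = a + t0*v1 -> y = c + t0*v2 -> Om (x,y) ->
  is_derive (fun t => comp u b w (a + t*v1) (c + t*v2)) t0
   (comp u b (false::w) x y * v1 + comp u b (true::w) x y * v2).
Proof.
  intros Ex Ey H.
  rewrite <- comp_pd1, <- comp_pd2.
  apply chain; auto.
  - eapply locally_2d_impl; [|exact (sm_loc _ _ H)].
    apply locally_2d_forall. intros p q Hp; apply sm_ex1; exact Hp.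
  - apply sm_ex2; exact H.
  - eapply continuity_2d_pt_ext; [|exact (sm_cont b (false::w) x y H)].
    intros p q; rewrite comp_pd1; reflexivity.
Qed.

Lemma comp_schwarz b w x y : Om (x,y) -> comp u b (false::true::w) x y = comp u b (true::false::w) x y.
Proof.
  intros H.
  rewrite <- comp_pd1. rewrite <- comp_pd2.
  transitivity (Derive (fun z => Derive (fun t => comp u b w z t) y) x).
  { apply Derive_ext. intros z. rewrite comp_pd2. reflexivity. }
  transitivity (Derive (fun z => Derive (fun t => comp u b w t z) x) y).
  2:{ apply Derive_ext. intros z. rewrite comp_pd1. reflexivity. }
  apply Schwarz.
  - eapply locally_2d_impl; [|exact (sm_loc _ _ H)].
    apply locally_2d_forall. intros p q Hp. split; [apply sm_ex1; exact Hp|].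
    split; [apply sm_ex2; exact Hp|]. split.
    + apply (ex_derive_ext (fun z => comp u b (true::w) z q)).
      { intros z. symmetry. apply comp_pd2. }
      apply (sm_ex1 b (true::w)); exact Hp.
    + apply (ex_derive_ext (fun z => comp u b (false::w) p z)).
      { intros z. symmetry. apply comp_pd1. }
      apply (sm_ex2 b (false::w)); exact Hp.
  - eapply continuity_2d_pt_ext; [|exact (sm_cont b (false::true::w) x y H)].
    intros p q. rewrite <- comp_pd1. apply Derive_ext. intros z. rewrite comp_pd2. reflexivity.
  - eapply continuity_2d_pt_ext; [|exact (sm_cont b (true::false::w) x y H)].
    intros p q. rewrite <- comp_pd2. apply Derive_ext. intros z. rewrite comp_pd1. reflexivity.
Qed.
End S.

Lemma cp_plus b z w : cp b (Cplus z w) = cp b z + cp b w.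
Proof. destruct b; reflexivity. Qed.
Lemma cp_ddir b n1 n2 u x y : cp b (ddir (n1,n2) u (x,y)) = n1 * comp u b (false::nil) x y + n2 * comp u b (true::nil) x y.
Proof. destruct b; unfold ddir, comp, cp; simpl; rewrite !Rmult_0_l; rewrite ?Rminus_0_r, ?Rplus_0_r; reflexivity. Qed.
Lemma cp_lap b u x y : cp b (lap u (x,y)) = comp u b (false::false::nil) x y + comp u b (true::true::nil) x y.
Proof. destruct b; reflexivity. Qed.
Lemma cp_scalC b r z : cp b (Cmult (RtoC r) z) = r * cp b z.
Proof. destruct z as [z1 z2]; destruct b; unfold cp, Cmult, RtoC, Re, Im; simpl; ring. Qed.
Lemma cp_0 b : cp b (RtoC 0) = 0.
Proof. destruct b; reflexivity. Qed.

Lemma isd_plus (f g : R -> R) x df dg : is_derive f x df -> is_derive g x dg -> is_derive (fun t => f t + g t) x (df + dg).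
Proof. intros; apply (is_derive_plus f g); assumption. Qed.

Lemma prod0 (E Z : R -> R) e' : is_derive E 0 e' -> is_derive Z 0 0 -> Z 0 = 0 ->
  is_derive (fun t => E t * Z t) 0 0.
Proof.
  intros HE HZ H0.
  assert (H := is_derive_mult E Z 0 e' 0 HE HZ Rmult_comm).
  set (l := plus _ _) in H.
  assert (Hv : l = 0).
  { unfold l. rewrite H0. unfold plus, mult; simpl. ring. }
  rewrite Hv in H. exact H.
Qed.
Lemma angle1 alpha: 0<alpha<1 -> alpha <> 1/2 -> cos(alpha*PI) <> 0.
Proof.
  intros Ha Hn Hc. apply Hn.
  assert (HP := PI_RGT_0).
  assert (E : alpha*PI = PI/2).
  { apply cos_inj; try split; try nra. rewrite Hc, cos_PI2; reflexivity. }
  apply (Rmult_eq_reg_r PI); [|lra]. lra.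
Qed.
Lemma angle2 alpha: 0<alpha<1 -> alpha <> 1/4 -> alpha <> 3/4 ->
  cos(alpha*PI)^2 - sin(alpha*PI)^2 <> 0.
Proof.
  intros Ha H1 H3 Hc.
  assert (HP := PI_RGT_0).
  assert (Hc2 : cos (2*(alpha*PI)) = 0) by (rewrite cos_2a; lra).
  destruct (Rle_dec (2*(alpha*PI)) PI) as [Hle|Hgt].
  - apply H1. assert (E : 2*(alpha*PI) = PI/2).
    { apply cos_inj; try split; try nra. rewrite Hc2, cos_PI2; reflexivity. }
    apply (Rmult_eq_reg_r PI); [|lra]. lra.
  - apply H3. assert (E : 2*PI - 2*(alpha*PI) = PI/2).
    { apply cos_inj; try split; try nra.
      rewrite cos_minus, cos_2PI, sin_2PI, Hc2, cos_PI2; ring. }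
    apply (Rmult_eq_reg_r PI); [|lra]. lra.
Qed.

Lemma grad_alg m1 m2 n1 n2 co si g1 g2: m1^2+m2^2=1 -> n1^2+n2^2=1 -> co^2+si^2=1 -> co<>0 ->
  n1*(co*m1 - si*m2) + n2*(si*m1 + co*m2) = 0 -> g1*m1 + g2*m2 = 0 -> n1*g1 + n2*g2 = 0 ->
  g1 = 0 /\ g2 = 0.
Proof.
  intros Hm Hn Hcs Hco Hnp E1 E2.
  set (p1 := co*m1 - si*m2) in *. set (p2 := si*m1 + co*m2) in *.
  set (X := g1*p2 - g2*p1). set (D := g1*p1 + g2*p2).
  assert (HX : X = 0).
  { assert (X = X*(n1^2+n2^2)) by (rewrite Hn; ring).
    assert (H1 : n1*X = 0).
    { replace (n1*X) with ((n1*g1+n2*g2)*p2 - g2*(n1*p1+n2*p2)) by (unfold X; ring). rewrite E2, Hnp; ring. }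
    assert (H2 : n2*X = 0).
    { replace (n2*X) with (g1*(n1*p1+n2*p2) - (n1*g1+n2*g2)*p1) by (unfold X; ring). rewrite E2, Hnp; ring. }
    rewrite H. replace (X*(n1^2+n2^2)) with (n1*(n1*X) + n2*(n2*X)) by ring. rewrite H1, H2; ring. }
  assert (Hp : p1^2+p2^2 = 1).
  { unfold p1, p2. replace ((co * m1 - si * m2) ^ 2 + (si * m1 + co * m2) ^ 2) with ((co^2+si^2)*(m1^2+m2^2)) by ring.
    rewrite Hm, Hcs; ring. }
  assert (G1 : g1 = D*p1 + X*p2) by (unfold D, X; replace g1 with (g1*(p1^2+p2^2)) at 1 by (rewrite Hp; ring); ring).
  assert (G2 : g2 = D*p2 - X*p1) by (unfold D, X; replace g2 with (g2*(p1^2+p2^2)) at 1 by (rewrite Hp; ring); ring).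
  assert (HD : D*co = 0).
  { assert (g1*m1 + g2*m2 = D*co*(m1^2+m2^2) + X*(m1*p2 - m2*p1)) by (rewrite G1, G2 at 1; unfold p1, p2; ring).
    rewrite Hm, HX in H. lra. }
  assert (D = 0) by (destruct (Rmult_integral _ _ HD); [auto|contradiction]).
  rewrite G1, G2, H, HX. split; ring.
Qed.

Lemma hess_alg m1 m2 n1 n2 co si a b d: m1^2+m2^2=1 -> n1^2+n2^2=1 -> co^2+si^2=1 -> co^2-si^2<>0 ->
  n1*(co*m1 - si*m2) + n2*(si*m1 + co*m2) = 0 -> a + d = 0 ->
  m1*(a*m1 + b*m2) + m2*(b*m1 + d*m2) = 0 ->
  n1*(a*(co*m1 - si*m2) + b*(si*m1 + co*m2)) + n2*(b*(co*m1 - si*m2) + d*(si*m1 + co*m2)) = 0 ->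
  a = 0 /\ b = 0 /\ d = 0.
Proof.
  intros Hm Hn Hcs Hdet Hnp Htr EA EB.
  set (p1 := co*m1 - si*m2) in *. set (p2 := si*m1 + co*m2) in *.
  assert (Hd : d = -a) by lra. subst d.
  assert (Hp : p1^2+p2^2 = 1).
  { unfold p1, p2. replace ((co * m1 - si * m2) ^ 2 + (si * m1 + co * m2) ^ 2) with ((co^2+si^2)*(m1^2+m2^2)) by ring.
    rewrite Hm, Hcs; ring. }
  set (k := n2*p1 - n1*p2).
  assert (N1 : n1 = -k*p2).
  { unfold k. replace n1 with (n1*(p1^2+p2^2)) at 1 by (rewrite Hp; ring).
    replace (n1 * (p1 ^ 2 + p2 ^ 2)) with (p1*(n1*p1+n2*p2) - p2*(n2*p1 - n1*p2)) by ring.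
    rewrite Hnp; ring. }
  assert (N2 : n2 = k*p1).
  { unfold k. replace n2 with (n2*(p1^2+p2^2)) at 1 by (rewrite Hp; ring).
    replace (n2 * (p1 ^ 2 + p2 ^ 2)) with (p2*(n1*p1+n2*p2) + p1*(n2*p1 - n1*p2)) by ring.
    rewrite Hnp; ring. }
  assert (Hk : k <> 0).
  { intro Hk0. rewrite Hk0 in N1, N2. rewrite N1, N2 in Hn. lra. }
  set (A := m1^2 - m2^2). set (Bm := 2*m1*m2). set (P := p1^2-p2^2). set (Q := 2*p1*p2).
  assert (EA' : a*A + b*Bm = 0) by (unfold A, Bm; rewrite <- EA; ring).
  assert (EB' : k*(-a*Q + b*P) = 0) by (unfold Q, P; rewrite <- EB, N1, N2; ring).
  assert (EB2 : -a*Q + b*P = 0) by (destruct (Rmult_integral _ _ EB'); [contradiction|auto]).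
  assert (Det : A*P + Bm*Q = (co^2 - si^2)*(m1^2+m2^2)^2) by (unfold A, P, Bm, Q, p1, p2; ring).
  rewrite Hm in Det.
  assert (Ha : a*(co^2-si^2) = 0).
  { replace (a*(co^2-si^2)) with (a*(A*P+Bm*Q)) by (rewrite Det; ring).
    replace (a*(A*P+Bm*Q)) with ((a*A+b*Bm)*P - Bm*(-a*Q+b*P)) by ring.
    rewrite EA', EB2; ring. }
  assert (Hb : b*(co^2-si^2) = 0).
  { replace (b*(co^2-si^2)) with (b*(A*P+Bm*Q)) by (rewrite Det; ring).
    replace (b*(A*P+Bm*Q)) with ((a*A+b*Bm)*Q + A*(-a*Q+b*P)) by ring.
    rewrite EA', EB2; ring. }
  destruct (Rmult_integral _ _ Ha); [|contradiction].
  destruct (Rmult_integral _ _ Hb); [|contradiction].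
  split; [|split]; lra.
Qed.

Lemma cp_mul0 b z : cp b (Cmult z (RtoC 0)) = 0.
Proof. destruct z; destruct b; unfold cp, Cmult, RtoC, Re, Im; simpl; ring. Qed.
Lemma cp_ext z : cp false z = 0 -> cp true z = 0 -> z = RtoC 0.
Proof. destruct z as [z1 z2]; unfold cp, Re, Im, RtoC; simpl; intros -> ->; reflexivity. Qed.

Lemma comb0 (E1 E2 Z1 Z2: R->R) e1 e2 s: is_derive E1 0 e1 -> is_derive E2 0 e2 ->
  is_derive Z1 0 0 -> is_derive Z2 0 0 -> Z1 0 = 0 -> Z2 0 = 0 ->
  is_derive (fun t => E1 t * Z1 t + s * (E2 t * Z2 t)) 0 0.
Proof.
  intros HE1 HE2 HZ1 HZ2 H1 H2.
  assert (K := isd_plus _ _ _ _ _ (prod0 _ _ _ HE1 HZ1 H1) (is_derive_scal _ _ s _ (prod0 _ _ _ HE2 HZ2 H2))).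
  rewrite Rmult_0_r, Rplus_0_r in K. exact K.
Qed.

Theorem theorem5p11
  (Om : R * R -> Prop) (lam : R) (u : R * R -> C)
  (x0 em ep nu : R * R) (h alpha : R) (eta2 : R -> C) :
  open Om ->
  0 < lam ->
  smooth_on Om u ->
  (forall p, Om p -> lap u p = Cmult (RtoC (- lam)) (u p)) ->
  Om x0 ->
  0 < h ->
  0 < alpha < 1 ->
  fst em ^ 2 + snd em ^ 2 = 1 ->
  ep = rot (alpha * PI) em ->
  (forall t, 0 <= t <= h -> Om (pt_add x0 (pt_scal t ep))) ->
  (forall t, 0 <= t <= h -> Om (pt_add x0 (pt_scal t em))) ->
  C1_on_interval 0 h eta2 ->
  fst nu ^ 2 + snd nu ^ 2 = 1 ->
  fst nu * fst ep + snd nu * snd ep = 0 ->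
  (forall t, 0 <= t <= h ->
     Cplus (ddir nu u (pt_add x0 (pt_scal t ep)))
           (Cmult (eta2 t) (u (pt_add x0 (pt_scal t ep)))) = RtoC 0) ->
  (forall t, 0 <= t <= h -> u (pt_add x0 (pt_scal t em)) = RtoC 0) ->
  alpha <> 1/4 -> alpha <> 1/2 -> alpha <> 3/4 ->
  forall w : list bool, (length w <= 2)%nat -> iter_pd w u x0 = RtoC 0.
Proof.
  intros Ho Hlam Hs Hlap Hx0 Hh Ha Hem Hep HOp HOm Heta Hnu Hnup Hrob Hdir H14 H12 H34.
  destruct x0 as [a c], em as [m1 m2], ep as [p1 p2], nu as [n1 n2]. cbn [fst snd] in *.
  unfold rot in Hep; cbn [fst snd] in Hep. injection Hep as Ep1 Ep2.
  set (co := cos (alpha*PI)) in *. set (si := sin (alpha*PI)) in *.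
  assert (Hcs : co^2 + si^2 = 1).
  { unfold co, si. rewrite <- (sin2_cos2 (alpha*PI)). unfold Rsqr. ring. }
  assert (Hco : co <> 0) by (apply angle1; auto).
  assert (Hdet : co^2 - si^2 <> 0) by (apply angle2; auto).
  assert (Hnp : n1*(co*m1 - si*m2) + n2*(si*m1 + co*m2) = 0) by (rewrite <- Ep1, <- Ep2; exact Hnup).
  unfold pt_add, pt_scal in *; cbn [fst snd] in *.
  assert (HG : forall b t, 0<=t<=h -> comp u b nil (a + t*m1) (c + t*m2) = 0).
  { intros b t Ht. unfold comp. simpl. rewrite (Hdir t Ht). destruct b; reflexivity. }
  assert (Hu0 : u (a,c) = RtoC 0).
  { replace (a,c) with (a + 0*m1, c + 0*m2) by (f_equal; ring). apply Hdir; lra. }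
  assert (Hrob0 : forall b, n1 * comp u b (false::nil) a c + n2 * comp u b (true::nil) a c = 0).
  { intros b. assert (K := Hrob 0 ltac:(lra)).
    replace (a + 0*p1, c + 0*p2) with (a,c) in K by (f_equal; ring).
    apply (f_equal (cp b)) in K. rewrite cp_plus, cp_ddir, Hu0, cp_mul0, cp_0 in K. lra. }
  assert (Hgr1 : forall b, comp u b (false::nil) a c * m1 + comp u b (true::nil) a c * m2 = 0).
  { intros b.
    apply (deriv_zero_right (fun t => comp u b nil (a + t*m1) (c + t*m2)) 0 h); [lra| |].
    - apply (comp_chain Om u Hs Ho b nil a c m1 m2 0 a c); try ring. exact Hx0.
    - intros t Ht. apply HG. lra. }
  assert (Hgrad : forall b, comp u b (false::nil) a c = 0 /\ comp u b (true::nil) a c = 0).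
  { intros b. apply (grad_alg m1 m2 n1 n2 co si); auto. }
  assert (HOm' : forall t, 0<=t<=h -> Om (a + t*m1, c + t*m2)) by exact HOm.
  assert (HOp' : forall t, 0<=t<=h -> Om (a + t*p1, c + t*p2)) by exact HOp.
  assert (HZ : forall b, is_derive (fun t => comp u b nil (a + t*p1) (c + t*p2)) 0 0).
  { intros b. assert (K := comp_chain Om u Hs Ho b nil a c p1 p2 0 a c ltac:(ring) ltac:(ring) Hx0).
    destruct (Hgrad b) as [G1 G2]. rewrite G1, G2 in K. rewrite !Rmult_0_l, Rplus_0_r in K. exact K. }
  assert (HZ0 : forall b, comp u b nil (a + 0*p1) (c + 0*p2) = 0).
  { intros b. replace (a + 0*p1) with a by ring. replace (c + 0*p2) with c by ring.
    unfold comp; simpl. rewrite Hu0. destruct b; reflexivity. }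
  destruct (Heta 0 ltac:(lra)) as (He1 & He2 & _ & _).
  assert (Hprod : forall b, is_derive (fun t => cp b (Cmult (eta2 t) (u (a + t*p1, c + t*p2)))) 0 0).
  { intros b. destruct b.
    - apply (is_derive_ext (fun t => Re (eta2 t) * comp u true nil (a + t*p1) (c + t*p2)
          + 1 * (Im (eta2 t) * comp u false nil (a + t*p1) (c + t*p2)))).
      { intros t. unfold comp, cp; simpl. unfold Re, Im; simpl. ring. }
      eapply comb0; try apply Derive_correct; auto.
    - apply (is_derive_ext (fun t => Re (eta2 t) * comp u false nil (a + t*p1) (c + t*p2)
          + (-1) * (Im (eta2 t) * comp u true nil (a + t*p1) (c + t*p2)))).
      { intros t. unfold comp, cp; simpl. unfold Re, Im; simpl. ring. }
      eapply comb0; try apply Derive_correct; auto. }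
  assert (Hhess : forall b, comp u b (false::false::nil) a c = 0 /\ comp u b (true::false::nil) a c = 0
     /\ comp u b (false::true::nil) a c = 0 /\ comp u b (true::true::nil) a c = 0).
  { intros b.
    assert (Hsch := comp_schwarz Om u Hs Ho b nil a c Hx0).
    assert (Htr : comp u b (false::false::nil) a c + comp u b (true::true::nil) a c = 0).
    { assert (K := Hlap (a,c) Hx0). apply (f_equal (cp b)) in K.
      rewrite cp_lap, cp_scalC, Hu0, cp_0 in K. lra. }
    assert (HG1 : forall t, 0<=t<=h/2 -> m1 * comp u b (false::nil) (a+t*m1) (c+t*m2)
                     + m2 * comp u b (true::nil) (a+t*m1) (c+t*m2) = 0).
    { intros t Ht.
      assert (K : comp u b (false::nil) (a+t*m1) (c+t*m2) * m1 + comp u b (true::nil) (a+t*m1) (c+t*m2) * m2 = 0).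
      { apply (deriv_zero_right (fun s => comp u b nil (a + s*m1) (c + s*m2)) t (h/2)); [lra| |].
        - apply (comp_chain Om u Hs Ho b nil a c m1 m2 t); try reflexivity. apply HOm'. lra.
        - intros s Hs'. apply HG. lra. }
      lra. }
    assert (EA : m1 * (comp u b (false::false::nil) a c * m1 + comp u b (true::false::nil) a c * m2)
               + m2 * (comp u b (false::true::nil) a c * m1 + comp u b (true::true::nil) a c * m2) = 0).
    { apply (deriv_zero_right (fun t => m1 * comp u b (false::nil) (a+t*m1) (c+t*m2)
                     + m2 * comp u b (true::nil) (a+t*m1) (c+t*m2)) 0 (h/2)); [lra| |].
      - apply isd_plus; apply is_derive_scal; apply (comp_chain Om u Hs Ho); try ring; exact Hx0.
      - intros t Ht. apply HG1. lra. }
    assert (EB : n1 * (comp u b (false::false::nil) a c * p1 + comp u b (true::false::nil) a c * p2)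
               + n2 * (comp u b (false::true::nil) a c * p1 + comp u b (true::true::nil) a c * p2) + 0 = 0).
    { apply (deriv_zero_right (fun t => n1 * comp u b (false::nil) (a+t*p1) (c+t*p2)
                     + n2 * comp u b (true::nil) (a+t*p1) (c+t*p2)
                     + cp b (Cmult (eta2 t) (u (a + t*p1, c + t*p2)))) 0 h); [lra| |].
      - apply isd_plus; [|apply Hprod].
        apply isd_plus; apply is_derive_scal; apply (comp_chain Om u Hs Ho); try ring; exact Hx0.
      - intros t Ht. assert (K := Hrob t ltac:(lra)). apply (f_equal (cp b)) in K.
        rewrite cp_plus, cp_ddir, cp_0 in K. rewrite <- K. reflexivity. }
    rewrite Hsch in EA, EB. rewrite Rplus_0_r in EB.
    rewrite Ep1, Ep2 in EB.
    destruct (hess_alg m1 m2 n1 n2 co si (comp u b (false::false::nil) a c) (comp u b (true::false::nil) a c)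
       (comp u b (true::true::nil) a c)) as (A1 & A2 & A3); auto.
    rewrite Hsch. auto. }
  assert (Hall : forall b w, (length w <= 2)%nat -> comp u b w a c = 0).
  { intros b w Hw.
    destruct w as [|b1 [|b2 [|b3 w]]].
    - unfold comp; simpl. rewrite Hu0. destruct b; reflexivity.
    - destruct (Hgrad b). destruct b1; auto.
    - destruct (Hhess b) as (A1 & A2 & A3 & A4). destruct b1, b2; auto.
    - simpl in Hw. lia. }
  intros w Hw. apply cp_ext; [apply (Hall false w Hw) | apply (Hall true w Hw)].
Qed.
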